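(* Let $m\ge 2$ and let $\mathcal{R}_m^4$ be the rose graph with $N_m=3m+1$ nodes. The global mean hitting times of the TURW, NBCRW and MERW on $\mathcal{R}_m^4$ are $$\langle T\rangle^{\mathrm T}=\frac{20m(3m-1)}{3(3m+1)}=\frac{20(N_m-1)(N_m-2)}{9N_m},$$ $$\langle T\rangle^{\mathrm B}=\frac{2m^3+12m^2-14m+4}{(3m+1)\sqrt{2m-1}}+\frac{36m^2-8m}{3(3m+1)}=\frac{2N_m^2+30N_m-192}{9\sqrt{6N_m-15}}+\frac{268+20\sqrt{6N_m-15}}{9N_m\sqrt{6N_m-15}}+\frac{12N_m-32}{9},$$ $$\langle T\rangle^{\mathrm M}=\frac{6m^3+36m^2+10m-12}{9m+3}=\frac{2N_m^3+30N_m^2-36N_m-104}{27N_m}.$$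
   Context: The rose graph $\mathcal{R}_m^4$ ($m\ge2$) is obtained by gluing $m$ cycles of length 4 at a single common node, the hub; it has $3m+1$ nodes. Let $\mathbf{A}=(a_{ij})$ be the adjacency matrix and $d_i$ the degrees. TURW: $p_{ij}=a_{ij}/d_i$. MERW: with $\lambda_1$ the largest eigenvalue of $\mathbf{A}$ and $\psi_1$ the positive unit eigenvector, $p_{ij}=\frac{a_{ij}}{\lambda_1}\frac{\psi_{1j}}{\psi_{1i}}$. NBCRW: the non-backtracking matrix $\mathbf{B}$ is indexed by directed edges $i\to j$ (two per undirected edge) with $B_{i\to j,k\to l}=1$ if $j=k$ and $i\ne l$, else $0$; $v$ is a non-negative eigenvector for its leading (Perron–Frobenius) eigenvalue; $x_i=\sum_{j\in\mathcal{N}_i}v_{i\to j}$; and $p_{ij}=a_{ij}x_j/\sum_k a_{ik}x_k$. For a random walk on $N$ nodes, the hitting time $T_{ij}$ is the expected number of steps to first reach $j$ starting from $i$, and the global mean hitting time is $\langle T\rangle=\frac{1}{N(N-1)}\sum_{i}\sum_{j\ne i}T_{ij}$. *)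

(* Defs.v *)
From HB Require Import structures.
From mathcomp Require Import all_boot all_order all_algebra.
From mathcomp Require Import all_classical all_reals all_analysis.
Set Implicit Arguments. Unset Strict Implicit. Unset Printing Implicit Defensive.
Import Order.TTheory GRing.Theory Num.Theory.
Import numFieldNormedType.Exports.
Local Open Scope ring_scope.

(* Labelling: node 0 is the hub; for c < m, the c-th 4-cycle is           *)
(*   0 -- 3c+1 -- 3c+2 -- 3c+3 -- 0.                                      *)
Definition rose_adj (n : nat) (i j : 'I_n) : bool :=
  let a := val i in let b := val j in
  if a == 0%N then (b != 0%N) && ((b.-1 %% 3)%N != 1%N)
  else if b == 0%N then ((a.-1 %% 3)%N != 1%N)
  else ((a.-1 %/ 3)%N == (b.-1 %/ 3)%N) && ((a.+1 == b) || (b.+1 == a)).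

Section Walks.
Variable R : realType.
Variable n : nat.

Definition adjmx (adj : 'I_n -> 'I_n -> bool) : 'M[R]_n :=
  \matrix_(i, j) (if adj i j then 1 else 0).

Definition degree (A : 'M[R]_n) (i : 'I_n) : R := \sum_j A i j.

Definition turw (A : 'M[R]_n) : 'M[R]_n :=
  \matrix_(i, j) (A i j / degree A i).

Definition merw (A : 'M[R]_n) (lam : R) (psi : 'cV[R]_n) : 'M[R]_n :=
  \matrix_(i, j) (A i j / lam * (psi j 0 / psi i 0)).

Definition merw_data (A : 'M[R]_n) (lam : R) (psi : 'cV[R]_n) : Prop :=
  [/\ eigenvalue A lam,
      (forall mu, eigenvalue A mu -> mu <= lam),
      A *m psi = lam *: psi,
      (forall i, 0 < psi i 0) &
      \sum_i psi i 0 ^+ 2 = 1].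

Definition dedge (adj : 'I_n -> 'I_n -> bool) : finType :=
  {p : 'I_n * 'I_n | adj p.1 p.2}.

Definition nbmx (adj : 'I_n -> 'I_n -> bool) (e f : dedge adj) : R :=
  if ((val e).2 == (val f).1) && ((val e).1 != (val f).2) then 1 else 0.

(* (x + i y) is a complex eigenvalue of the real matrix M (indexed by a   *)
(* finite type D), written out in real and imaginary parts: there is a     *)
(* nonzero complex vector a + i b with M (a + i b) = (x + i y) (a + i b). *)
Definition complex_eigenvalue (D : finType) (M : D -> D -> R) (x y : R) : Prop :=
  exists a b : D -> R,
    (exists e, a e != 0 \/ b e != 0) /\
    forall e, \sum_f M e f * a f = x * a e - y * b e /\
              \sum_f M e f * b f = x * b e + y * a e.

(* mu is the leading (Perron-Frobenius) eigenvalue of B and v is a        *)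
(* non-negative (nonzero) eigenvector for it.                             *)
Definition nb_data (adj : 'I_n -> 'I_n -> bool) (mu : R) (v : dedge adj -> R) : Prop :=
  [/\ (forall e, 0 <= v e),
      (exists e, v e != 0),
      (forall e, \sum_f nbmx e f * v f = mu * v e) &
      (forall x y, complex_eigenvalue (@nbmx adj) x y -> x ^+ 2 + y ^+ 2 <= mu ^+ 2)].

Definition nb_centrality (adj : 'I_n -> 'I_n -> bool) (v : dedge adj -> R) (i : 'I_n) : R :=
  \sum_(e : dedge adj | (val e).1 == i) v e.

Definition nbcrw (A : 'M[R]_n) (x : 'I_n -> R) : 'M[R]_n :=
  \matrix_(i, j) (A i j * x j / \sum_k A i k * x k).

(* Hitting times.  For a transition matrix P and target j, the taboo      *)
(* matrix Q forbids entering j; ((Q^k) *m P) i j = sum over paths          *)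
(* i = x_0, x_1, ..., x_k, x_{k+1} = j with x_1..x_k <> j of the product   *)
(* of transition probabilities, i.e. the probability that the first        *)
(* passage time to j from i equals k+1.                                   *)
Definition taboo (P : 'M[R]_n) (j : 'I_n) : 'M[R]_n :=
  \matrix_(k, l) (if l == j then 0 else P k l).

Definition first_passage (P : 'M[R]_n) (i j : 'I_n) (k : nat) : R :=
  ((taboo P j ^+ k *m P) i j).

Definition hitting_terms (P : 'M[R]_n) (i j : 'I_n) : nat -> R :=
  fun k => (k.+1)%:R * first_passage P i j k.

Definition hitting_time (P : 'M[R]_n) (i j : 'I_n) : R :=
  limn (series (hitting_terms P i j)).

Definition hitting_time_finite (P : 'M[R]_n) : Prop :=
  forall i j : 'I_n, i != j -> cvgn (series (hitting_terms P i j)).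

Definition gmht (P : 'M[R]_n) : R :=
  (\sum_i \sum_(j | j != i) hitting_time P i j) / (n%:R * (n%:R - 1)).

End Walks.

(* Main.v *)
Require Import Defs.
From HB Require Import structures.
From mathcomp Require Import all_boot all_order all_algebra.
From mathcomp Require Import all_classical all_reals all_analysis.
From mathcomp Require Import ring lra zify.
From Stdlib Require Import Lia.
Import Order.TTheory GRing.Theory Num.Theory.
Import numFieldNormedType.Exports.
Local Open Scope classical_set_scope.
Local Open Scope ring_scope.


Lemma nt_bound (R : realType) (t : R) (K : nat) : 0 <= t -> t < 1 ->
  K%:R * t ^+ K * (1 - t) <= 1 - t ^+ K.
Proof.
move=> t0 t1; elim: K => [|K IH]; first by rewrite expr0 mulr0n !mul0r subrr.
have hK : 0 <= t ^+ K by rewrite exprn_ge0.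
have hK1 : t ^+ K <= 1 by rewrite exprn_ile1 // ltW.
rewrite exprS -natr1.
have e : (K%:R + 1) * (t * t ^+ K) * (1 - t) = t * (K%:R * t ^+ K * (1 - t)) + t * t^+K * (1 - t) by ring.
rewrite e.
have H1 := ler_wpM2l t0 IH.
have H2 : 0 <= (1 - t) * (1 - t * t ^+ K).
  apply: mulr_ge0; first lra.
  have : t * t ^+ K <= 1 * 1 by apply: ler_pM => //; lra.
  lra.
set X := K%:R * t ^+ K * (1 - t) in H1 *.
set Y := t ^+ K in H1 H2 *.
have e2 : t * (1 - Y) + t * Y * (1 - t) = 1 - t * Y - (1 - t) * (1 - t * Y) by ring.
have e3 : t * X + t * Y * (1 - t) <= t * (1 - Y) + t * Y * (1 - t) by lra.
lra.
Qed.

Lemma mono_mul (R : realType) n (Q : 'M[R]_n) (x y : 'cV[R]_n) :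
  (forall i l, 0 <= Q i l) -> (forall l, x l 0 <= y l 0) ->
  forall i, (Q *m x) i 0 <= (Q *m y) i 0.
Proof.
move=> Q0 xy i; rewrite !mxE; apply: ler_sum => l _.
by apply: ler_wpM2l.
Qed.

Lemma pow_nonneg (R : realType) n (Q : 'M[R]_n) k :
  (forall i l, 0 <= Q i l) -> forall i l, 0 <= (Q ^+ k) i l.
Proof.
move=> Q0; elim: k => [|k IH] i l.
  by rewrite expr0 mxE; case: (i == l).
rewrite exprS -mulmxE mxE; apply: sumr_ge0 => s _; exact: mulr_ge0.
Qed.

Lemma hit_gen (R : realType) n (P : 'M[R]_n) (j : 'I_n) (h : 'I_n -> R) :
  (forall i l, 0 <= P i l) -> (forall i, \sum_l P i l = 1) ->
  (forall i, 0 <= h i) ->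
  (forall i, h i = 1 + \sum_(l | l != j) P i l * h l) ->
  forall i, series (hitting_terms P i j) @ \oo --> h i.
Proof.
move=> P0 P1 h0 hE i.
set Q := taboo P j.
have QQ : taboo P j = Q by [].
have QE : forall a b, Q a b = if b == j then 0 else P a b by move=> a b; rewrite mxE.
clearbody Q.
have Q0 : forall a b, 0 <= Q a b by move=> a b; rewrite QE; case: ifP.
set hv : 'cV[R]_n := \col_a h a.
have hvE : forall a, hv a 0 = h a by move=> a; rewrite mxE.
clearbody hv.
set on : 'cV[R]_n := const_mx 1.
have onE : forall a, on a 0 = 1 by move=> a; rewrite mxE.
clearbody on.
have Qh : forall a, (Q *m hv) a 0 = h a - 1.
  move=> a; rewrite (hE a) addrC addKr mxE [RHS]big_mkcond /=.
  by apply: eq_bigr => l _; rewrite QE hvE; case: (l == j); rewrite ?mul0r.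
have Pj : forall a, P a j = 1 - (Q *m on) a 0.
  move=> a.
  have -> : (Q *m on) a 0 = \sum_(l | l != j) P a l.
    rewrite mxE [RHS]big_mkcond /=.
    by apply: eq_bigr => l _; rewrite QE onE; case: (l == j); rewrite ?mul0r ?mulr1.
  by rewrite -(P1 a) (bigD1 j) //= addrK.
have h1 : forall a, 1 <= h a.
  move=> a; have e := Qh a.
  have : 0 <= (Q *m hv) a 0.
    by rewrite mxE; apply: sumr_ge0 => l _; apply: mulr_ge0; [exact: Q0 | rewrite hvE; exact: h0].
  lra.
pose a k := ((Q ^+ k) *m on) i 0.
pose b k := ((Q ^+ k) *m hv) i 0.
have fpE : forall k, first_passage P i j k = a k - a k.+1.
  move=> k; rewrite /first_passage /a QQ exprSr -mulmxE -mulmxA.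
  rewrite mxE [X in _ = X - _]mxE [X in _ = _ - X]mxE -sumrB; apply: eq_bigr => l _.
  by rewrite Pj onE; ring.
have bE : forall k, b k = a k + b k.+1.
  move=> k; rewrite /b /a exprSr -mulmxE -mulmxA.
  have hvE' : hv = on + Q *m hv by apply/matrixP => x y; rewrite ord1 [RHS]mxE onE Qh hvE; ring.
  by rewrite [in LHS]hvE' mulmxDr mxE.
have serE : forall K, series (hitting_terms P i j) K = h i - (b K + K%:R * a K).
  elim => [|K IH].
    by rewrite /series /= big_nil /b expr0 mul1mx hvE mul0r addr0 subrr.
  rewrite seriesSr IH /hitting_terms fpE (bE K).
  rewrite -natr1; ring.
pose M := 1 + \sum_l h l.
have hM : forall l, h l <= M.
  move=> l; rewrite /M (bigD1 l) //=.
  have : 0 <= \sum_(k | k != l) h k by apply: sumr_ge0.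
  lra.
have M1 : 1 <= M by have := hM i; have := h1 i; lra.
have M0 : 0 < M by lra.
pose r := 1 - M^-1.
have Mi0 : 0 < M^-1 by rewrite invr_gt0.
have Mi1 : M^-1 <= 1 by rewrite invf_le1.
have r0 : 0 <= r by rewrite /r; lra.
have r1 : r < 1 by rewrite /r; lra.
have Qr : forall l, (Q *m hv) l 0 <= r * h l.
  move=> l; rewrite Qh /r.
  have : h l * M^-1 <= 1 by rewrite ler_pdivrMr // mul1r.
  lra.
have iter : forall k l, ((Q ^+ k) *m hv) l 0 <= r ^+ k * h l.
  elim => [|k IH] l; first by rewrite expr0 mul1mx hvE mul1r.
  rewrite exprS -mulmxE -mulmxA.
  have st1 := @mono_mul R n Q ((Q ^+ k) *m hv) (r ^+ k *: hv) Q0.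
  apply: le_trans (st1 _ l) _.
    by move=> l'; rewrite [X in _ <= X]mxE hvE; exact: IH.
  rewrite -scalemxAr [X in X <= _]mxE exprSr -mulrA; apply: ler_wpM2l; first exact: exprn_ge0.
  exact: Qr.
have a0 : forall k, 0 <= a k.
  move=> k; rewrite /a mxE; apply: sumr_ge0 => l _.
  by apply: mulr_ge0; [exact: pow_nonneg | rewrite onE].
have ab : forall k, a k <= b k.
  move=> k; apply: mono_mul; first exact: pow_nonneg.
  by move=> l; rewrite onE hvE.
pose t := Num.sqrt r.
have t0 : 0 <= t by exact: sqrtr_ge0.
have tt : t ^+ 2 = r by rewrite sqr_sqrtr.
have tt2 : t * t = r by rewrite -expr2.
have t1 : t < 1.
  rewrite ltNge; apply/negP => H.
  have : 1 * 1 <= t * t by apply: ler_pM.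
  lra.
have hi0 := h0 i.
have bK : forall K, b K <= t ^+ K * h i.
  move=> K; apply: le_trans (iter K i) _; apply: ler_wpM2r => //.
  rewrite -tt -exprM mul2n -addnn exprD.
  have H1 : t ^+ K <= 1 by rewrite exprn_ile1 // ltW.
  have H2 : 0 <= t ^+ K by rewrite exprn_ge0.
  by rewrite -[X in _ <= X]mulr1; apply: ler_wpM2l.
have aK : forall K, K%:R * a K <= t ^+ K * (h i * (1 - t)^-1).
  move=> K.
  have nb := @nt_bound R t K t0 t1.
  have tK0 : 0 <= t ^+ K by rewrite exprn_ge0.
  have nb2 : K%:R * t ^+ K <= (1 - t)^-1.
    rewrite -[X in _ <= X]mul1r ler_pdivlMr; last lra.
    lra.
  have s1 : K%:R * a K <= K%:R * (t ^+ K * (t ^+ K * h i)).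
    apply: ler_wpM2l => //; apply: le_trans (ab K) _.
    apply: le_trans (iter K i) _; rewrite -tt -exprM mul2n -addnn exprD -mulrA //.
  apply: le_trans s1 _.
  have e : K%:R * (t ^+ K * (t ^+ K * h i)) = t ^+ K * ((K%:R * t ^+ K) * h i) by ring.
  rewrite e; apply: ler_wpM2l => //.
  by rewrite mulrC; apply: ler_wpM2l.
pose C := h i + h i * (1 - t)^-1.
have dC : forall K, 0 <= b K + K%:R * a K <= C * t ^+ K.
  move=> K; apply/andP; split.
    by apply: addr_ge0; [apply: le_trans (ab K) | apply: mulr_ge0].
  have := bK K; have := aK K.
  have -> : C * t ^+ K = t ^+ K * h i + t ^+ K * (h i * (1 - t)^-1) by rewrite /C; ring.
  lra.
have dcv : (fun K => b K + K%:R * a K) @ \oo --> (0 : R).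
  apply: (@squeeze_cvgr _ _ _ _ (fun _ => 0) (fun K => C * t ^+ K)).
  - by apply: nearW => K; exact: dC K.
  - exact: cvg_cst.
  - have := cvgM (cvg_cst C) (cvg_expr (z := t) _).
    rewrite mulr0; apply.
    by rewrite ger0_norm.
have -> : series (hitting_terms P i j) = (fun K => h i - (b K + K%:R * a K)).
  by apply: funext => K; rewrite serE.
rewrite -[X in _ --> X]subr0.
apply: cvgB; [exact: cvg_cst | exact: dcv].
Qed.
Lemma hit_val (R : realType) n (P : 'M[R]_n) (j : 'I_n) (h : 'I_n -> R) :
  (forall i l, 0 <= P i l) -> (forall i, \sum_l P i l = 1) ->
  (forall i, 0 <= h i) ->
  (forall i, h i = 1 + \sum_(l | l != j) P i l * h l) ->
  forall i, cvgn (series (hitting_terms P i j)) /\ hitting_time P i j = h i.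
Proof.
move=> P0 P1 h0 hE i; have H := @hit_gen R n P j h P0 P1 h0 hE i.
split; first exact: (cvgP _ H).
rewrite /hitting_time; exact: (cvg_lim _ H).
Qed.
Definition blk (a : nat) : nat := (a.-1 %/ 3)%N.
Definition rr (a : nat) : nat := (a.-1 %% 3)%N.
Definition radj (a b : nat) : bool :=
  if a == 0%N then (b != 0%N) && (rr b != 1%N)
  else if b == 0%N then rr a != 1%N
  else (blk a == blk b) && ((a.+1 == b) || (b.+1 == a)).

Lemma rose_adjE n (i j : 'I_n) : rose_adj i j = radj i j.
Proof. by []. Qed.

Lemma blkE c k : (k < 3)%N -> blk (3 * c + k.+1) = c.
Proof.
move=> hk; rewrite /blk addnS /= mulnC divnMDl // divn_small //.
by rewrite addn0.
Qed.

Lemma rrE c k : (k < 3)%N -> rr (3 * c + k.+1) = k.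
Proof. by move=> hk; rewrite /rr addnS /= mulnC modnMDl modn_small. Qed.

Lemma eq3 c d x y : (0 < x <= 3)%N -> (0 < y <= 3)%N ->
  (3 * c + x == 3 * d + y) = (c == d) && (x == y).
Proof.
move=> hx hy; apply/idP/idP => [/eqP H|/andP [/eqP -> /eqP ->] //].
apply/andP; split; apply/eqP; lia.
Qed.

Lemma eq30 c x : (3 * c + x.+1 == 0)%N = false.
Proof. by rewrite addnS. Qed.

Lemma sum3 (R : realType) (F : nat -> R) m :
  \sum_(0 <= i < 3 * m) F i = \sum_(0 <= c < m) (F (3 * c) + F (3 * c + 1)%N + F (3 * c + 2)%N).
Proof.
elim: m => [|m IH]; first by rewrite muln0 !big_geq.
rewrite [RHS]big_nat_recr //= -IH mulnSr addn3 !big_nat_recr //= addn1 addn2; ring.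
Qed.

Lemma sumN (R : realType) (F : nat -> R) m :
  \sum_(i < (3 * m).+1) F i = F 0%N + \sum_(c < m) (F (3 * c + 1)%N + F (3 * c + 2)%N + F (3 * c + 3)%N).
Proof.
rewrite big_ord_recl /=; congr (_ + _).
have -> : \sum_(i < 3 * m) F (lift ord0 i) = \sum_(i < 3 * m) F i.+1.
  by apply: eq_bigr => i _; rewrite lift0.
rewrite -(big_mkord xpredT (fun i => F i.+1)) sum3 big_mkord.
by apply: eq_bigr => c _; congr (F _ + F _ + F _); lia.
Qed.
Lemma radj00 : radj 0 0 = false. Proof. by []. Qed.
Lemma radj0k c k : (k < 3)%N -> radj 0 (3 * c + k.+1) = (k != 1%N).
Proof. by move=> hk; rewrite /radj /= eq30 rrE. Qed.
Lemma radjk0 c k : (k < 3)%N -> radj (3 * c + k.+1) 0 = (k != 1%N).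
Proof. by move=> hk; rewrite /radj eq30 /= rrE. Qed.
Lemma radjkk c k d k' : (k < 3)%N -> (k' < 3)%N ->
  radj (3 * c + k.+1) (3 * d + k'.+1) = (c == d) && ((k.+1 == k') || (k'.+1 == k)).
Proof.
move=> hk hk'; rewrite /radj !eq30 /= !blkE //.
case: eqP => //= ->; by rewrite -!addnS !eqn_add2l.
Qed.

Lemma rowH (R : realType) m (g : nat -> R) :
  \sum_(l < (3 * m).+1) (if radj 0 l then g l else 0) = \sum_(c < m) (g (3 * c + 1)%N + g (3 * c + 3)%N).
Proof.
rewrite (@sumN R (fun l => if radj 0 l then g l else 0)) radj00 add0r.
by apply: eq_bigr => c _; rewrite !radj0k //= addr0.
Qed.

Lemma rowB (R : realType) m (g : nat -> R) c0 k0 : (c0 < m)%N -> (k0 < 3)%N ->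
  \sum_(l < (3 * m).+1) (if radj (3 * c0 + k0.+1) l then g l else 0) =
  (if k0 != 1%N then g 0%N else 0) +
  ((if (k0.+1 == 0%N) || (1 == k0)%N then g (3 * c0 + 1)%N else 0) +
   (if (k0.+1 == 1%N) || (2 == k0)%N then g (3 * c0 + 2)%N else 0) +
   (if (k0.+1 == 2%N) || (3 == k0)%N then g (3 * c0 + 3)%N else 0)).
Proof.
move=> hc0 hk0.
rewrite (@sumN R (fun l => if radj (3 * c0 + k0.+1) l then g l else 0)) radjk0 //; congr (_ + _).
rewrite (bigD1 (Ordinal hc0)) //= big1 ?addr0.
  by rewrite !radjkk // eqxx.
move=> c hc.
have e : (c0 == c) = false.
  apply/eqP => E; move/eqP: hc; apply; apply: val_inj; by rewrite /= E.
by rewrite !radjkk // e /= !addr0.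
Qed.

Lemma row1 (R : realType) m (g : nat -> R) c0 : (c0 < m)%N ->
  \sum_(l < (3 * m).+1) (if radj (3 * c0 + 1) l then g l else 0) = g 0%N + g (3 * c0 + 2)%N.
Proof. by move=> h; rewrite (@rowB R m g c0 0) //= add0r addr0. Qed.
Lemma row2 (R : realType) m (g : nat -> R) c0 : (c0 < m)%N ->
  \sum_(l < (3 * m).+1) (if radj (3 * c0 + 2) l then g l else 0) = g (3 * c0 + 1)%N + g (3 * c0 + 3)%N.
Proof. by move=> h; rewrite (@rowB R m g c0 1) //= add0r addr0. Qed.
Lemma row3 (R : realType) m (g : nat -> R) c0 : (c0 < m)%N ->
  \sum_(l < (3 * m).+1) (if radj (3 * c0 + 3) l then g l else 0) = g 0%N + g (3 * c0 + 2)%N.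
Proof. by move=> h; rewrite (@rowB R m g c0 2) //= add0r addr0. Qed.
Lemma nodeP m (a : nat) : (a < (3 * m).+1)%N ->
  a = 0%N \/ exists2 c, (c < m)%N & [\/ a = (3 * c + 1)%N, a = (3 * c + 2)%N | a = (3 * c + 3)%N].
Proof.
move=> ha; case: a ha => [|a] ha; first by left.
right; exists (a %/ 3)%N.
  rewrite ltn_divLR //; lia.
have := divn_eq a 3; have : (a %% 3 < 3)%N by rewrite ltn_mod.
case: (a %% 3)%N => [|[|[|k]]] //= _ e.
- by constructor 1; rewrite [in LHS]e; lia.
- by constructor 2; rewrite [in LHS]e; lia.
- by constructor 3; rewrite [in LHS]e; lia.
Qed.

Section Chain.
Variable R : realType.
Variable m : nat.
Let N := (3 * m).+1.

Definition prw (p : R) (a b : nat) : R :=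
  if a == 0%N then (2 * m%:R)^-1 else if b == 0%N then p
  else if rr a == 1%N then 2^-1 else 1 - p.

Definition Pg (p : R) : 'M[R]_N := \matrix_(i, j) (if radj i j then prw p i j else 0).

Lemma sum_conv (P : 'M[R]_N) (j : 'I_N) (i : 'I_N) (G : nat -> nat -> R) (f : nat -> R) :
  (forall l : 'I_N, P i l = if radj i l then G i l else 0) ->
  \sum_(l | l != j) P i l * f l = \sum_(l < N) (if radj i l then G i l * (if (l == j :> nat) then 0 else f l) else 0).
Proof.
move=> PE; rewrite big_mkcond /=; apply: eq_bigr => l _.
rewrite PE; case: (radj i l); last by rewrite !mul0r; case: ifP.
case: (l =P j) => [->|ne] /=; first by rewrite !eqxx mulr0.
have ne1 : (nat_of_ord l == nat_of_ord j) = false by apply/eqP => E; apply: ne; apply: val_inj.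
have ne2 : (l == j) = false by apply/eqP.
by rewrite ne1.
Qed.

Lemma sum_split (f : nat -> R) cj K : (cj < m)%N ->
  (forall c, (c < m)%N -> c != cj -> f c = K) ->
  \sum_(c < m) f c = f cj + (m%:R - 1) * K.
Proof.
move=> hc fK; rewrite (bigD1 (Ordinal hc)) //=; congr (_ + _).
rewrite (eq_bigr (fun=> K)); last first.
  by move=> c hc'; apply: fK.
rewrite sumr_const -[in LHS]mulr_natl; congr (_ * _).
rewrite cardC1 card_ord; case: (m) hc => // m' _.
by rewrite -natr1 addrK.
Qed.

Lemma sum_const_m (K : R) : \sum_(c < m) K = m%:R * K.
Proof. by rewrite sumr_const card_ord mulr_natl. Qed.

End Chain.
Lemma eq03 c x : (0 == 3 * c + x.+1)%N = false.
Proof. by rewrite addnS. Qed.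

Section HV.
Variable R : realType.
Variable m : nat.
Variable p : R.
Let N := (3 * m).+1.
Let mm : R := m%:R.

Definition Xc : R := (2 - p) / p.
Definition H2 : R := mm * (1 + p) + (2 - p) + (mm - 1) * (2 - p) * (1 + p) / p.
Definition E2 : R := 2 * (2 - p + p * H2) / (1 + p).
Definition M2 : R := 1 + E2 / 2.
Definition T2 : R := 1 + p * H2 + (1 - p) * M2.
Definition H3 : R := (mm + 1 + (mm - 1) * Xc) / (1 - p).
Definition E3 : R := 1 + p * H3.

Definition hv (j a : nat) : R :=
  if j == 0%N then (if a == 0%N then 1 + Xc else if rr a == 1%N then 1 + Xc else Xc)
  else if rr j == 1%N then
    (if a == 0%N then H3 else if blk a == blk j then (if rr a == 1%N then 1 + E3 else E3)
     else (if rr a == 1%N then H3 + Xc + 1 else H3 + Xc))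
  else
    (if a == 0%N then H2 else if blk a == blk j then
       (if rr a == 1%N then M2 else if rr a == rr j then T2 else E2)
     else (if rr a == 1%N then H2 + Xc + 1 else H2 + Xc)).

Definition gf (a ja l : nat) : R := @prw R m p a l * (if l == ja then 0 else hv ja l).
Definition rsum (a ja : nat) : R := \sum_(l < N) (if radj a l then gf a ja l else 0).

Lemma rsumE (i j : 'I_N) : \sum_(l | l != j) @Pg R m p i l * hv j l = rsum i j.
Proof. by rewrite (@sum_conv R m _ j i (@prw R m p)) // => l; rewrite mxE. Qed.

Lemma rsumH ja : rsum 0 ja = \sum_(c < m) (gf 0 ja (3 * c + 1) + gf 0 ja (3 * c + 3)).
Proof. exact: (@rowH R m (gf 0 ja)). Qed.
Lemma rsum1 c ja : (c < m)%N -> rsum (3 * c + 1) ja = gf (3 * c + 1) ja 0 + gf (3 * c + 1) ja (3 * c + 2).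
Proof. exact: (@row1 R m (gf (3 * c + 1) ja)). Qed.
Lemma rsum2 c ja : (c < m)%N -> rsum (3 * c + 2) ja = gf (3 * c + 2) ja (3 * c + 1) + gf (3 * c + 2) ja (3 * c + 3).
Proof. exact: (@row2 R m (gf (3 * c + 2) ja)). Qed.
Lemma rsum3 c ja : (c < m)%N -> rsum (3 * c + 3) ja = gf (3 * c + 3) ja 0 + gf (3 * c + 3) ja (3 * c + 2).
Proof. exact: (@row3 R m (gf (3 * c + 3) ja)). Qed.

End HV.
Arguments prw {R}. Arguments Pg {R}. Arguments hv {R}. Arguments rsum {R}. Arguments Xc {R}.
Arguments H2 {R}. Arguments E2 {R}. Arguments M2 {R}. Arguments T2 {R}. Arguments H3 {R}. Arguments E3 {R}.
Arguments gf {R}.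
Ltac hsimp := rewrite /gf /hv /prw ?eq30 ?eq03 ?rrE ?blkE ?eq3 ?eqxx //=.

Lemma hv_eq (R : realType) m (p : R) (hm : (1 <= m)%N) (p0 : p != 0) (p1 : 1 - p != 0) (p2 : 1 + p != 0)
  (j i : 'I_(3 * m).+1) : hv m p j i = 1 + rsum m p i j.
Proof.
have m0 : (m%:R : R) != 0 by rewrite pnatr_eq0 -lt0n.
have two0 : (2 : R) != 0 by [].
case: (@nodeP m _ (ltn_ord j)) => [Ej | [cj hcj Ej3]].
  rewrite Ej; case: (@nodeP m _ (ltn_ord i)) => [Ei | [ci hci Ei3]].
    rewrite Ei rsumH (eq_bigr (fun=> (2 * m%:R)^-1 * Xc p + (2 * m%:R)^-1 * Xc p)); last by move=> c _; hsimp.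
    rewrite (@sum_const_m R m); hsimp; rewrite /Xc; field; rewrite ?p0 ?p1 ?p2 ?m0 //.
  by case: Ei3 => ->; rewrite ?rsum1 ?rsum2 ?rsum3 //; hsimp; rewrite /Xc; field; rewrite ?p0 ?p1 ?p2 ?m0 //.
case: (@nodeP m _ (ltn_ord i)) => [Ei | [ci hci Ei3]].
  rewrite Ei rsumH.
  have SS : forall ja K, (forall c, (c < m)%N -> c != cj -> gf m p 0 ja (3 * c + 1) + gf m p 0 ja (3 * c + 3) = K) ->
     \sum_(c < m) (gf m p 0 ja (3 * c + 1) + gf m p 0 ja (3 * c + 3)) =
     (gf m p 0 ja (3 * cj + 1) + gf m p 0 ja (3 * cj + 3)) + (m%:R - 1) * K.
    by move=> ja K hK; apply: (@sum_split R m (fun c => gf m p 0 ja (3 * c + 1) + gf m p 0 ja (3 * c + 3))).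
  case: Ej3 => ->.
  - rewrite (SS _ ((2 * m%:R)^-1 * (H2 m p + Xc p) + (2 * m%:R)^-1 * (H2 m p + Xc p))) //; last first.
      by move=> c hc ne; hsimp; rewrite (negbTE ne).
    hsimp; rewrite /T2 /M2 /E2 /H2 /Xc; field; rewrite ?p0 ?p1 ?p2 ?m0 //.
  - rewrite (SS _ ((2 * m%:R)^-1 * (H3 m p + Xc p) + (2 * m%:R)^-1 * (H3 m p + Xc p))) //; last first.
      by move=> c hc ne; hsimp; rewrite (negbTE ne).
    hsimp; rewrite /E3 /H3 /Xc; field; rewrite ?p0 ?p1 ?p2 ?m0 //.
  - rewrite (SS _ ((2 * m%:R)^-1 * (H2 m p + Xc p) + (2 * m%:R)^-1 * (H2 m p + Xc p))) //; last first.
      by move=> c hc ne; hsimp; rewrite (negbTE ne).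
    hsimp; rewrite /T2 /M2 /E2 /H2 /Xc; field; rewrite ?p0 ?p1 ?p2 ?m0 //.
case: Ej3 => ->; case: Ei3 => ->; rewrite ?rsum1 ?rsum2 ?rsum3 //;
  (case: (eqVneq ci cj) => [->|ne]; hsimp; rewrite ?(negbTE ne) /=;
   rewrite /T2 /M2 /E2 /H2 /E3 /H3 /Xc; field; rewrite ?p0 ?p1 ?p2 ?m0 //).
Qed.

Lemma mm_ge1 (R : realType) (m : nat) (hm : (1 <= m)%N) : (1 : R) <= m%:R.
Proof. by rewrite ler1n. Qed.

Lemma Pg_ge0 (R : realType) (m : nat) (p : R) (hm : (1 <= m)%N) (pp0 : 0 < p) (pp1 : p < 1) (i l : 'I_(3 * m).+1) : 0 <= Pg m p i l.
Proof.
have h1 := @mm_ge1 R m hm.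
rewrite mxE; case: ifP => // _; rewrite /prw; case: ifP => _.
  by rewrite invr_ge0; lra.
case: eqP => _; first lra.
by case: eqP => _; [rewrite invr_ge0; lra | lra].
Qed.

Lemma Pg_sum (R : realType) (m : nat) (p : R) (hm : (1 <= m)%N) (pp0 : 0 < p) (pp1 : p < 1) (i : 'I_(3 * m).+1) : \sum_l Pg m p i l = 1.
Proof.
have m0 : (m%:R : R) != 0 by rewrite pnatr_eq0 -lt0n.
have -> : \sum_l Pg m p i l = \sum_(l < (3 * m).+1) (if radj i l then prw m p i l else 0).
  by apply: eq_bigr => l _; rewrite mxE.
case: (@nodeP m _ (ltn_ord i)) => [-> | [c hc Ei3]].
  rewrite (@rowH R m (prw m p 0)) (eq_bigr (fun=> (2 * m%:R)^-1 + (2 * m%:R)^-1)).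
    by rewrite (@sum_const_m R m); field.
  by move=> c _; rewrite /prw.
case: Ei3 => ->.
- by rewrite (@row1 R m (prw m p (3 * c + 1))) // /prw ?eq30 ?eq03 ?rrE //=; ring.
- by rewrite (@row2 R m (prw m p (3 * c + 2))) // /prw ?eq30 ?eq03 ?rrE //=; field.
- by rewrite (@row3 R m (prw m p (3 * c + 3))) // /prw ?eq30 ?eq03 ?rrE //=; ring.
Qed.

Lemma consts_pos (R : realType) (m : nat) (p : R) (hm : (1 <= m)%N) (pp0 : 0 < p) (pp1 : p < 1) : 0 < Xc p /\ 0 < H2 m p /\ 0 < E2 m p /\ 0 < M2 m p /\ 0 < T2 m p /\ 0 < H3 m p /\ 0 < E3 m p.
Proof.
have h1 := @mm_ge1 R m hm.
have X0 : 0 < Xc p by rewrite /Xc divr_gt0 //; lra.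
have H20 : 0 < H2 m p.
  rewrite /H2; have : 0 <= (m%:R - 1) * (2 - p) * (1 + p) / p.
    by apply: divr_ge0; [apply: mulr_ge0; [apply: mulr_ge0|]|]; lra.
  have : 0 < m%:R * (1 + p) by apply: mulr_gt0; lra.
  lra.
have E20 : 0 < E2 m p.
  rewrite /E2; apply: divr_gt0; last lra.
  have : 0 < p * H2 m p by apply: mulr_gt0.
  lra.
have M20 : 0 < M2 m p.
  rewrite /M2; have : 0 < E2 m p / 2 by apply: divr_gt0.
  lra.
have T20 : 0 < T2 m p.
  rewrite /T2; have : 0 < p * H2 m p by apply: mulr_gt0.
  have : 0 < (1 - p) * M2 m p by apply: mulr_gt0; lra.
  lra.
have H30 : 0 < H3 m p.
  rewrite /H3; apply: divr_gt0; last lra.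
  have : 0 <= (m%:R - 1) * Xc p by apply: mulr_ge0; lra.
  lra.
have E30 : 0 < E3 m p.
  rewrite /E3; have : 0 < p * H3 m p by apply: mulr_gt0.
  lra.
by do !split.
Qed.

Lemma hv_ge0 (R : realType) (m : nat) (p : R) (hm : (1 <= m)%N) (pp0 : 0 < p) (pp1 : p < 1) (j a : nat) : 0 <= hv m p j a.
Proof.
have [X0 [H20 [E20 [M20 [T20 [H30 E30]]]]]] := @consts_pos R m p hm pp0 pp1.
rewrite /hv; repeat case: ifP => _; lra.
Qed.

Lemma Pg_hit (R : realType) (m : nat) (p : R) (hm : (1 <= m)%N) (pp0 : 0 < p) (pp1 : p < 1) : hitting_time_finite (Pg m p) /\
  forall i j : 'I_(3 * m).+1, hitting_time (Pg m p) i j = hv m p j i.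
Proof.
have p0 : p != 0 by rewrite gt_eqF.
have p1 : 1 - p != 0 by rewrite subr_eq0 eq_sym lt_eqF.
have p2 : 1 + p != 0 by rewrite gt_eqF //; lra.
have H : forall i j : 'I_(3 * m).+1, cvgn (series (hitting_terms (Pg m p) i j)) /\ hitting_time (Pg m p) i j = hv m p j i.
  move=> i j.
  apply: (@hit_val R (3 * m).+1 (Pg m p) j (fun a : 'I_(3 * m).+1 => hv m p j a)).
  - exact: (@Pg_ge0 R m p hm pp0 pp1).
  - exact: (@Pg_sum R m p hm pp0 pp1).
  - by move=> a; exact: (@hv_ge0 R m p hm pp0 pp1).
  - by move=> a; rewrite rsumE hv_eq.
split; first by move=> i j _; case: (H i j).
by move=> i j; case: (H i j).
Qed.

Lemma exch (R : realType) n (F : 'I_n -> 'I_n -> R) :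
  \sum_i \sum_(j | j != i) F j i = \sum_j (\sum_i F j i - F j j).
Proof.
have E : forall i, \sum_(j | j != i) F j i = \sum_j F j i - F i i.
  by move=> i; rewrite [X in _ = X - _](bigD1 i) //= addrC addrK.
rewrite (eq_bigr _ (fun i _ => E i)) sumrB exchange_big /= -sumrB.
by [].
Qed.

Definition S0 (R : realType) (m : nat) (p : R) : R :=
  let X := Xc p in let mm : R := m%:R in (1 + X) + mm * (X + (1 + X) + X) - (1 + X).
Definition V1 (R : realType) (m : nat) (p : R) : R :=
  let X := Xc p in let mm : R := m%:R in let H := H2 m p in
  H + (T2 m p + M2 m p + E2 m p) + (mm - 1) * ((H + X) + (H + X + 1) + (H + X)) - T2 m p.
Definition V2 (R : realType) (m : nat) (p : R) : R :=
  let X := Xc p in let mm : R := m%:R in let H := H3 m p in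
  H + (E3 m p + (1 + E3 m p) + E3 m p) + (mm - 1) * ((H + X) + (H + X + 1) + (H + X)) - (1 + E3 m p).
Definition V3 (R : realType) (m : nat) (p : R) : R :=
  let X := Xc p in let mm : R := m%:R in let H := H2 m p in
  H + (E2 m p + M2 m p + T2 m p) + (mm - 1) * ((H + X) + (H + X + 1) + (H + X)) - T2 m p.
Arguments S0 {R}. Arguments V1 {R}. Arguments V2 {R}. Arguments V3 {R}.
Definition GT (R : realType) (m : nat) (p : R) : R :=
  let mm : R := m%:R in
  (S0 m p + mm * (V1 m p + V2 m p + V3 m p)) / ((3 * mm + 1) * (3 * mm + 1 - 1)).

Arguments GT {R}.

Lemma Sj_hub (R : realType) m (p : R) :
  \sum_(i < (3 * m).+1) hv m p 0 i - hv m p 0 0 = S0 m p.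
Proof.
rewrite (@sumN R (hv m p 0)) (eq_bigr (fun=> Xc p + (1 + Xc p) + Xc p)); last by move=> c _; hsimp.
by rewrite (@sum_const_m R m) /S0.
Qed.

Lemma Sj_blk (R : realType) m (p : R) cj : (cj < m)%N ->
  [/\ \sum_(i < (3 * m).+1) hv m p (3 * cj + 1) i - hv m p (3 * cj + 1) (3 * cj + 1) = V1 m p,
      \sum_(i < (3 * m).+1) hv m p (3 * cj + 2) i - hv m p (3 * cj + 2) (3 * cj + 2) = V2 m p &
      \sum_(i < (3 * m).+1) hv m p (3 * cj + 3) i - hv m p (3 * cj + 3) (3 * cj + 3) = V3 m p].
Proof.
move=> hcj.
have SS : forall ja K, (forall c, (c < m)%N -> c != cj -> hv m p ja (3 * c + 1) + hv m p ja (3 * c + 2) + hv m p ja (3 * c + 3) = K) ->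
   \sum_(c < m) (hv m p ja (3 * c + 1) + hv m p ja (3 * c + 2) + hv m p ja (3 * c + 3)) =
   (hv m p ja (3 * cj + 1) + hv m p ja (3 * cj + 2) + hv m p ja (3 * cj + 3)) + (m%:R - 1) * K.
  by move=> ja K hK; apply: (@sum_split R m (fun c => hv m p ja (3 * c + 1) + hv m p ja (3 * c + 2) + hv m p ja (3 * c + 3))).
split.
- rewrite (@sumN R (hv m p (3 * cj + 1))) (SS _ ((H2 m p + Xc p) + (H2 m p + Xc p + 1) + (H2 m p + Xc p))); last first.
    by move=> c hc ne; hsimp; rewrite (negbTE ne).
  by hsimp; rewrite /V1 /=; ring.
- rewrite (@sumN R (hv m p (3 * cj + 2))) (SS _ ((H3 m p + Xc p) + (H3 m p + Xc p + 1) + (H3 m p + Xc p))); last first.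
    by move=> c hc ne; hsimp; rewrite (negbTE ne).
  by hsimp; rewrite /V2 /=; ring.
- rewrite (@sumN R (hv m p (3 * cj + 3))) (SS _ ((H2 m p + Xc p) + (H2 m p + Xc p + 1) + (H2 m p + Xc p))); last first.
    by move=> c hc ne; hsimp; rewrite (negbTE ne).
  by hsimp; rewrite /V3 /=; ring.
Qed.

Lemma Pg_gmht (R : realType) (m : nat) (p : R) (hm : (1 <= m)%N) (pp0 : 0 < p) (pp1 : p < 1) :
  gmht (Pg m p) = GT m p.
Proof.
have [_ HT] := @Pg_hit R m p hm pp0 pp1.
rewrite /gmht (eq_bigr (fun i : 'I_(3 * m).+1 => \sum_(j | j != i) hv m p j i)); last first.
  by move=> i _; apply: eq_bigr => j _; rewrite HT.
rewrite (@exch R _ (fun j i : 'I_(3 * m).+1 => hv m p j i)).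
rewrite (@sumN R (fun a => \sum_(i < (3 * m).+1) hv m p a i - hv m p a a)) Sj_hub.
rewrite (eq_bigr (fun=> V1 m p + V2 m p + V3 m p)); last first.
  by move=> c _; have [-> -> ->] := @Sj_blk R m p c (ltn_ord c).
rewrite (@sum_const_m R m) /GT.
by rewrite -natr1 natrM.
Qed.
Ltac unfT := rewrite /GT /S0 /V1 /V2 /V3 /T2 /M2 /E2 /E3 /H2 /H3 /Xc /=.
Ltac nzs := repeat (apply/andP; split); try (apply/eqP => ?; nra).

Lemma GT_turw (R : realType) m : (2 <= m)%N ->
  GT m (2^-1 : R) = 20 * m%:R * (3 * m%:R - 1) / (3 * (3 * m%:R + 1)).
Proof.
move=> hm; have h2 : (2 : R) <= m%:R by rewrite ler_nat.
unfT; field; nzs.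
Qed.

Lemma GT_merw (R : realType) m : (2 <= m)%N ->
  GT m (m%:R / (m%:R + 1) : R) = (6 * m%:R ^+ 3 + 36 * m%:R ^+ 2 + 10 * m%:R - 12) / (9 * m%:R + 3).
Proof.
move=> hm; have h2 : (2 : R) <= m%:R by rewrite ler_nat.
unfT; field; nzs.
Qed.
Lemma GT_nb (R : realType) m : (2 <= m)%N ->
  GT m (m%:R / (m%:R + Num.sqrt (2 * m%:R - 1)) : R) =
  (2 * m%:R ^+ 3 + 12 * m%:R ^+ 2 - 14 * m%:R + 4) / ((3 * m%:R + 1) * Num.sqrt (2 * m%:R - 1))
  + (36 * m%:R ^+ 2 - 8 * m%:R) / (3 * (3 * m%:R + 1)).
Proof.
move=> hm; have h2 : (2 : R) <= m%:R by rewrite ler_nat.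
set s := Num.sqrt (2 * m%:R - 1).
have hs : s ^+ 2 = 2 * m%:R - 1 by rewrite sqr_sqrtr //; lra.
have s0 : 0 < s by rewrite sqrtr_gt0; lra.
have hmm : (m%:R : R) = (s ^+ 2 + 1) / 2 by rewrite hs; field.
have s1 : 1 < s.
  rewrite ltNge; apply/negP => H.
  have : s ^+ 2 <= 1 by rewrite expr2; have := ler_pM (ltW s0) (ltW s0) H H; rewrite mul1r.
  lra.
unfT; rewrite hmm; field; nzs.
Qed.
Lemma adj_ind m (Phi : nat -> nat -> Prop) :
  (forall c, (c < m)%N -> Phi 0%N (3 * c + 1)%N) ->
  (forall c, (c < m)%N -> Phi 0%N (3 * c + 3)%N) ->
  (forall c, (c < m)%N -> Phi (3 * c + 1)%N 0%N) ->
  (forall c, (c < m)%N -> Phi (3 * c + 1)%N (3 * c + 2)%N) ->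
  (forall c, (c < m)%N -> Phi (3 * c + 2)%N (3 * c + 1)%N) ->
  (forall c, (c < m)%N -> Phi (3 * c + 2)%N (3 * c + 3)%N) ->
  (forall c, (c < m)%N -> Phi (3 * c + 3)%N 0%N) ->
  (forall c, (c < m)%N -> Phi (3 * c + 3)%N (3 * c + 2)%N) ->
  forall a b, (a < (3 * m).+1)%N -> (b < (3 * m).+1)%N -> radj a b -> Phi a b.
Proof.
move=> h1 h2 h3 h4 h5 h6 h7 h8 a b ha hb.
case: (@nodeP m _ ha) => [-> | [c hc Ea]]; case: (@nodeP m _ hb) => [-> | [d hd Eb]].
- by rewrite radj00.
- by case: Eb => ->; rewrite radj0k //= => _; auto.
- by case: Ea => ->; rewrite radjk0 //= => _; auto.
- case: Ea => ->; case: Eb => ->; rewrite radjkk //= ?andbF ?andbT // => /eqP <-; auto.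
Qed.

Lemma degE (R : realType) m (i : 'I_(3 * m).+1) :
  degree (adjmx R (@rose_adj (3 * m).+1)) i = if nat_of_ord i == 0%N then 2 * m%:R else 2.
Proof.
rewrite /degree.
have -> : \sum_j adjmx R (@rose_adj (3 * m).+1) i j = \sum_(l < (3 * m).+1) (if radj i l then (fun _ => (1 : R)) l else 0).
  by apply: eq_bigr => l _; rewrite mxE.
case: (@nodeP m _ (ltn_ord i)) => [-> | [c hc Ei3]].
  rewrite (@rowH R m (fun _ => 1)) (@sum_const_m R m) /=; ring.
by case: Ei3 => ->; rewrite ?(@row1 R m (fun _ => 1)) ?(@row2 R m (fun _ => 1)) ?(@row3 R m (fun _ => 1)) // eq30.
Qed.

Lemma turw_Pg (R : realType) m : (1 <= m)%N ->
  turw (adjmx R (@rose_adj (3 * m).+1)) = Pg m (2^-1 : R).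
Proof.
move=> hm; have m0 : (m%:R : R) != 0 by rewrite pnatr_eq0 -lt0n.
apply/matrixP => i j; rewrite !mxE degE rose_adjE.
case: (radj i j); last by rewrite mul0r.
rewrite mul1r /prw; case: eqP => _ //.
by case: eqP => _ //; case: eqP => _ //; field.
Qed.
Lemma lt3 m c k : (c < m)%N -> (k <= 3)%N -> (3 * c + k < (3 * m).+1)%N.
Proof. move=> h1 h2; lia. Qed.

Lemma merw_Pg (R : realType) m (hm : (1 <= m)%N) (lam : R) (psi : 'cV[R]_(3 * m).+1) :
  merw_data (adjmx R (@rose_adj (3 * m).+1)) lam psi ->
  merw (adjmx R (@rose_adj (3 * m).+1)) lam psi = Pg m (m%:R / (m%:R + 1)).
Proof.
case=> _ _ Hev Hpos _.
have m0 : (m%:R : R) != 0 by rewrite pnatr_eq0 -lt0n.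
have h1 : (1 : R) <= m%:R by rewrite ler1n.
pose ps : nat -> R := fun a => psi (inord a) 0.
have psE : forall l : 'I_(3 * m).+1, psi l 0 = ps l by move=> l; rewrite /ps inord_val.
have pos : forall a, 0 < ps a by move=> a; exact: Hpos.
have ev : forall a, (a < (3 * m).+1)%N -> \sum_(l < (3 * m).+1) (if radj a l then ps l else 0) = lam * ps a.
  move=> a ha; have := congr1 (fun M : 'M[R]_((3 * m).+1, 1) => M (inord a) 0) Hev; rewrite !mxE => <-.
  apply: eq_bigr => l _; rewrite !mxE rose_adjE inordK // psE.
  by case: (radj a l); rewrite ?mul1r ?mul0r.
have eH := ev 0%N (ltn0Sn _); rewrite (@rowH R m ps) in eH.
have e1 : forall c, (c < m)%N -> ps 0%N + ps (3 * c + 2)%N = lam * ps (3 * c + 1)%N.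
  by move=> c hc; rewrite -(@row1 R m ps c hc) ev // lt3.
have e2 : forall c, (c < m)%N -> ps (3 * c + 1)%N + ps (3 * c + 3)%N = lam * ps (3 * c + 2)%N.
  by move=> c hc; rewrite -(@row2 R m ps c hc) ev // lt3.
have e3 : forall c, (c < m)%N -> ps 0%N + ps (3 * c + 2)%N = lam * ps (3 * c + 3)%N.
  by move=> c hc; rewrite -(@row3 R m ps c hc) ev // lt3.
have lam0 : 0 < lam.
  have := e2 0%N hm; have := pos (3 * 0 + 1)%N; have := pos (3 * 0 + 2)%N; have := pos (3 * 0 + 3)%N.
  nra.
have lamn0 : lam != 0 by rewrite gt_eqF.
have blk13 : forall c, (c < m)%N -> ps (3 * c + 3)%N = ps (3 * c + 1)%N.
  move=> c hc; have E1 := e1 c hc; have E3 := e3 c hc.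
  have : lam * (ps (3 * c + 3)%N - ps (3 * c + 1)%N) = 0 by rewrite mulrBr -E1 -E3 subrr.
  by move/eqP; rewrite mulf_eq0 (negbTE lamn0) /= subr_eq0 => /eqP.
have blk2 : forall c, (c < m)%N -> ps (3 * c + 2)%N = 2 * ps (3 * c + 1)%N / lam.
  move=> c hc; have E2 := e2 c hc; rewrite blk13 // in E2.
  by apply: (mulfI lamn0); rewrite -E2; field.
have blk1 : forall c, (c < m)%N -> ps (3 * c + 1)%N * (lam ^+ 2 - 2) = lam * ps 0%N.
  move=> c hc; have E1 := e1 c hc; rewrite blk2 // in E1.
  have -> : ps 0%N = lam * ps (3 * c + 1)%N - 2 * ps (3 * c + 1)%N / lam by rewrite -E1; field.
  by field.
have ps0 : ps 0%N != 0 by rewrite gt_eqF.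
have u0 : lam * ps 0%N != 0 by rewrite mulf_neq0.
have L0 : lam ^+ 2 - 2 != 0.
  apply/eqP => L; have := blk1 0%N hm; rewrite L mulr0 => /esym/eqP; by rewrite (negbTE u0).
have k1 : forall c, (c < m)%N -> ps (3 * c + 1)%N = lam * ps 0%N / (lam ^+ 2 - 2).
  by move=> c hc; apply: (mulIf L0); rewrite blk1 //; field.
have k3 : forall c, (c < m)%N -> ps (3 * c + 3)%N = lam * ps 0%N / (lam ^+ 2 - 2).
  by move=> c hc; rewrite blk13 // k1.
have k2 : forall c, (c < m)%N -> ps (3 * c + 2)%N = 2 * (lam * ps 0%N / (lam ^+ 2 - 2)) / lam.
  by move=> c hc; rewrite blk2 // k1.
rewrite (eq_bigr (fun=> lam * ps 0%N / (lam ^+ 2 - 2) + lam * ps 0%N / (lam ^+ 2 - 2))) in eH; last first.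
  by move=> c _; rewrite k1 // k3.
rewrite (@sum_const_m R m) in eH.
have hmm : (m%:R : R) = (lam ^+ 2 - 2) / 2.
  set u := lam * ps 0%N in eH u0 *; set L := lam ^+ 2 - 2 in eH L0 *.
  have E' : (m%:R * 2 - L) * u = (m%:R * (u / L + u / L) - u) * L by field.
  rewrite eH subrr mul0r in E'.
  by move/eqP: E'; rewrite mulf_eq0 (negbTE u0) orbF subr_eq0 => /eqP E2; rewrite -E2; field.
apply/matrixP => i j; rewrite !mxE rose_adjE !psE.
case E: (radj i j); last by rewrite !mul0r.
have key : forall a b : nat, (a < (3 * m).+1)%N -> (b < (3 * m).+1)%N -> radj a b ->
    1 / lam * (ps b / ps a) = prw m (m%:R / (m%:R + 1)) a b.
  apply: adj_ind => c hc;
  rewrite /prw ?eq30 ?eq03 ?rrE //= ?k1 ?k2 ?k3 // ?hmm; field;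
  rewrite ?subrK ?expf_eq0 /= ?L0 ?ps0 ?lamn0 //.
by apply: key.
Qed.
Definition wo (R : realType) n (adj : 'I_n -> 'I_n -> bool) (v : dedge adj -> R) (i j : 'I_n) : R :=
  \sum_(e : dedge adj | ((val e).1 == i) && ((val e).2 == j)) v e.
Arguments wo {R n adj}.

Lemma wo_v (R : realType) n (adj : 'I_n -> 'I_n -> bool) (v : dedge adj -> R) (e : dedge adj) :
  v e = wo v (val e).1 (val e).2.
Proof.
rewrite /wo (bigD1 e) ?eqxx //= big1 ?addr0 // => f /andP [/andP [h1 h2] hne].
case/eqP: hne; apply: val_inj.
by apply: injective_projections; apply/eqP.
Qed.

Lemma wo_nadj (R : realType) n (adj : 'I_n -> 'I_n -> bool) (v : dedge adj -> R) i j :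
  ~~ adj i j -> wo v i j = 0.
Proof.
move=> nij; rewrite /wo big1 // => e /andP [/eqP h1 /eqP h2].
by move: (valP e) nij; rewrite h1 h2 => ->.
Qed.

Lemma wo_ge0 (R : realType) n (adj : 'I_n -> 'I_n -> bool) (v : dedge adj -> R) i j :
  (forall e, 0 <= v e) -> 0 <= wo v i j.
Proof. by move=> h; rewrite /wo; apply: sumr_ge0. Qed.

Lemma cent_wo (R : realType) n (adj : 'I_n -> 'I_n -> bool) (v : dedge adj -> R) i :
  nb_centrality v i = \sum_j wo v i j.
Proof.
rewrite /nb_centrality (partition_big (fun e : dedge adj => (val e).2) xpredT) //=.
Qed.

Lemma eig_wo (R : realType) n (adj : 'I_n -> 'I_n -> bool) (v : dedge adj -> R) (mu : R) i j :
  (forall e, \sum_f nbmx R e f * v f = mu * v e) -> adj i j ->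
  mu * wo v i j = \sum_l (if l == i then 0 else wo v j l).
Proof.
move=> hev hij.
pose e0 : dedge adj := exist _ (i, j) hij.
have -> : wo v i j = v e0 by rewrite (@wo_v R n adj v e0).
rewrite -hev (partition_big (fun f : dedge adj => (val f).2) xpredT) //=.
apply: eq_bigr => l _.
case: eqP => [->|ne].
  by rewrite big1 // => f /eqP h; rewrite /nbmx /= h eqxx /= andbF mul0r.
rewrite /wo big_mkcond [RHS]big_mkcond /=; apply: eq_bigr => f _.
rewrite /nbmx /=.
case: eqP => [h2|]; last by rewrite andbF.
rewrite h2 andbT.
have -> : (i != l) = true by apply/eqP => E; apply: ne; rewrite E.
by rewrite andbT eq_sym; case: eqP; rewrite ?mul1r ?mul0r.
Qed.
Lemma nb_key (R : realType) m (mu a0 : R) (xn : nat -> R) : (2 <= m)%N -> mu != 0 -> 0 < a0 ->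
  mu ^+ 4 = 2 * m%:R - 1 ->
  xn 0%N = (mu ^+ 4 + 1) * a0 ->
  (forall c, (c < m)%N -> xn (3 * c + 1)%N = (mu ^+ 3 + mu) * a0) ->
  (forall c, (c < m)%N -> xn (3 * c + 2)%N = 2 * mu ^+ 2 * a0) ->
  (forall c, (c < m)%N -> xn (3 * c + 3)%N = (mu ^+ 3 + mu) * a0) ->
  forall a b, (a < (3 * m).+1)%N -> (b < (3 * m).+1)%N -> radj a b ->
  xn b / \sum_(k < (3 * m).+1) (if radj a k then xn k else 0) =
  prw m (m%:R / (m%:R + Num.sqrt (2 * m%:R - 1))) a b.
Proof.
move=> hm mu0 a00 hmu hx0 hx1 hx2 hx3.
have h2 : (2 : R) <= m%:R by rewrite ler_nat.
have hs : Num.sqrt (2 * m%:R - 1) = mu ^+ 2.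
  by rewrite -hmu -[mu ^+ 4]/(mu ^+ (2 * 2)) exprM sqrtr_sqr ger0_norm // sqr_ge0.
have hmm : (m%:R : R) = (mu ^+ 4 + 1) / 2 by rewrite hmu; field.
have mu2 : 0 < mu ^+ 2 by rewrite exprn_even_gt0.
have a0n : a0 != 0 by rewrite gt_eqF.
rewrite hs.
apply: adj_ind => c hc.
- rewrite (@rowH R m xn) (eq_bigr (fun=> (mu ^+ 3 + mu) * a0 + (mu ^+ 3 + mu) * a0)); last first.
    by move=> d _; rewrite hx1 // hx3.
  rewrite (@sum_const_m R m) hx1 // /prw /= hmm; field; nzs.
- rewrite (@rowH R m xn) (eq_bigr (fun=> (mu ^+ 3 + mu) * a0 + (mu ^+ 3 + mu) * a0)); last first.
    by move=> d _; rewrite hx1 // hx3.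
  rewrite (@sum_const_m R m) hx3 // /prw /= hmm; field; nzs.
all: rewrite ?(@row1 R m xn c hc) ?(@row2 R m xn c hc) ?(@row3 R m xn c hc) ?hx0 ?hx1 ?hx2 ?hx3 //
  /prw ?eq30 ?rrE //= ?hmm; field; nzs.
Qed.
Lemma sum_excl (R : realType) m (x y : nat -> R) c : (c < m)%N ->
  \sum_(d < m) (x d + (if (d == c :> nat) then 0 else y d)) = \sum_(d < m) (x d + y d) - y c.
Proof.
move=> hc.
have E : forall d : 'I_m, x d + (if (d == c :> nat) then 0 else y d) = (x d + y d) - (if (d == c :> nat) then y d else 0).
  by move=> d; case: ifP => _; rewrite ?subr0 ?addr0 ?addrK.
rewrite (eq_bigr _ (fun d _ => E d)) sumrB; congr (_ - _).
rewrite (bigD1 (Ordinal hc)) //= eqxx big1 ?addr0 // => d hd.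
by case: ifP => // /eqP E'; move/eqP: hd; case; apply: val_inj.
Qed.

Lemma sum_excl1 (R : realType) m (x y : nat -> R) c : (c < m)%N ->
  \sum_(d < m) ((if (d == c :> nat) then 0 else y d) + x d) = \sum_(d < m) (y d + x d) - y c.
Proof.
move=> hc; have := @sum_excl R m x y c hc.
have -> : \sum_(d < m) ((if (d == c :> nat) then 0 else y d) + x d) = \sum_(d < m) (x d + (if (d == c :> nat) then 0 else y d)).
  by apply: eq_bigr => d _; rewrite addrC.
move=> ->; congr (_ - _); apply: eq_bigr => d _; exact: addrC.
Qed.

Lemma nb_Pg (R : realType) m (hm : (2 <= m)%N) (mu : R) (v : dedge (@rose_adj (3 * m).+1) -> R) :
  nb_data mu v ->
  nbcrw (adjmx R (@rose_adj (3 * m).+1)) (nb_centrality v) =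
  Pg m (m%:R / (m%:R + Num.sqrt (2 * m%:R - 1))).
Proof.
case=> v0 [e1 ve1] hev _.
have hm1 : (1 <= m)%N by apply: ltnW.
have hm0 : (0 < m)%N by apply: ltnW.
pose w (a b : nat) : R := wo v (inord a) (inord b).
have woE : forall i j : 'I_(3 * m).+1, wo v i j = w i j by move=> i j; rewrite /w !inord_val.
have w0 : forall a b, 0 <= w a b by move=> a b; exact: wo_ge0.
have wna : forall a b, (a < (3 * m).+1)%N -> (b < (3 * m).+1)%N -> ~~ radj a b -> w a b = 0.
  by move=> a b ha hb nab; rewrite /w wo_nadj // rose_adjE !inordK.
have weig : forall a b, (a < (3 * m).+1)%N -> (b < (3 * m).+1)%N -> radj a b ->
    mu * w a b = \sum_(l < (3 * m).+1) (if radj b l then (if (l == a :> nat) then 0 else w b l) else 0).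
  move=> a b ha hb hab; rewrite /w (@eig_wo R _ _ v mu (inord a) (inord b) hev); last by rewrite rose_adjE !inordK.
  apply: eq_bigr => l _.
  have -> : (l == inord a) = (l == a :> nat) by rewrite -val_eqE /= inordK.
  case E: (radj b l); first by rewrite inord_val.
  by case: ifP => // _; have := wna b l hb (ltn_ord l); rewrite E /w inord_val => /(_ isT) ->.
have cent : forall a, (a < (3 * m).+1)%N -> nb_centrality v (inord a) = \sum_(l < (3 * m).+1) (if radj a l then w a l else 0).
  move=> a ha; rewrite cent_wo; apply: eq_bigr => l _.
  case E: (radj a l); first by rewrite /w inord_val.
  by have := wna a l ha (ltn_ord l); rewrite E /w inord_val => /(_ isT) ->.
pose S := \sum_(d < m) (w 0%N (3 * d + 1)%N + w 0%N (3 * d + 3)%N).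
have EQ : forall c, (c < m)%N ->
  [/\ mu * w 0%N (3 * c + 1)%N = w (3 * c + 1)%N (3 * c + 2)%N,
      mu * w (3 * c + 1)%N (3 * c + 2)%N = w (3 * c + 2)%N (3 * c + 3)%N,
      mu * w (3 * c + 2)%N (3 * c + 3)%N = w (3 * c + 3)%N 0%N &
      mu * w (3 * c + 3)%N 0%N = S - w 0%N (3 * c + 3)%N].
  move=> c hc.
  have h0 : (0 < (3 * m).+1)%N by [].
  have h1 := @lt3 m c 1 hc isT; have h2 := @lt3 m c 2 hc isT; have h3 := @lt3 m c 3 hc isT.
  split.
  - rewrite (weig 0%N (3 * c + 1)%N h0 h1); last by rewrite radj0k.
    by rewrite (@row1 R m (fun l => if l == 0%N then 0 else w (3 * c + 1)%N l) c hc) /= eq30 add0r.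
  - rewrite (weig (3 * c + 1)%N (3 * c + 2)%N h1 h2); last by rewrite radjkk // eqxx.
    by rewrite (@row2 R m (fun l => if l == (3 * c + 1)%N then 0 else w (3 * c + 2)%N l) c hc) /= eqxx eq3 //= andbF add0r.
  - rewrite (weig (3 * c + 2)%N (3 * c + 3)%N h2 h3); last by rewrite radjkk // eqxx.
    by rewrite (@row3 R m (fun l => if l == (3 * c + 2)%N then 0 else w (3 * c + 3)%N l) c hc) /= eqxx eq03 addr0.
  - rewrite (weig (3 * c + 3)%N 0%N h3 h0); last by rewrite radjk0.
    rewrite (@rowH R m (fun l => if l == (3 * c + 3)%N then 0 else w 0%N l)) /=.
    rewrite (eq_bigr (fun d : 'I_m => w 0%N (3 * d + 1)%N + (if (d == c :> nat) then 0 else w 0%N (3 * d + 3)%N))).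
      by rewrite (@sum_excl R m (fun d => w 0%N (3 * d + 1)%N) (fun d => w 0%N (3 * d + 3)%N) c hc).
    by move=> d _; rewrite !eq3 //= andbF andbT.
have FQ : forall c, (c < m)%N ->
  [/\ mu * w 0%N (3 * c + 3)%N = w (3 * c + 3)%N (3 * c + 2)%N,
      mu * w (3 * c + 3)%N (3 * c + 2)%N = w (3 * c + 2)%N (3 * c + 1)%N,
      mu * w (3 * c + 2)%N (3 * c + 1)%N = w (3 * c + 1)%N 0%N &
      mu * w (3 * c + 1)%N 0%N = S - w 0%N (3 * c + 1)%N].
  move=> c hc.
  have h0 : (0 < (3 * m).+1)%N by [].
  have h1 := @lt3 m c 1 hc isT; have h2 := @lt3 m c 2 hc isT; have h3 := @lt3 m c 3 hc isT.
  split.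
  - rewrite (weig 0%N (3 * c + 3)%N h0 h3); last by rewrite radj0k.
    by rewrite (@row3 R m (fun l => if l == 0%N then 0 else w (3 * c + 3)%N l) c hc) /= eq30 add0r.
  - rewrite (weig (3 * c + 3)%N (3 * c + 2)%N h3 h2); last by rewrite radjkk // eqxx.
    by rewrite (@row2 R m (fun l => if l == (3 * c + 3)%N then 0 else w (3 * c + 2)%N l) c hc) /= eqxx eq3 //= andbF addr0.
  - rewrite (weig (3 * c + 2)%N (3 * c + 1)%N h2 h1); last by rewrite radjkk // eqxx.
    by rewrite (@row1 R m (fun l => if l == (3 * c + 2)%N then 0 else w (3 * c + 1)%N l) c hc) /= eqxx eq03 addr0.
  - rewrite (weig (3 * c + 1)%N 0%N h1 h0); last by rewrite radjk0.
    rewrite (@rowH R m (fun l => if l == (3 * c + 1)%N then 0 else w 0%N l)) /=.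
    rewrite (eq_bigr (fun d : 'I_m => (if (d == c :> nat) then 0 else w 0%N (3 * d + 1)%N) + w 0%N (3 * d + 3)%N)).
      by rewrite (@sum_excl1 R m (fun d => w 0%N (3 * d + 3)%N) (fun d => w 0%N (3 * d + 1)%N) c hc).
    by move=> d _; rewrite !eq3 //= andbF andbT.
have A4 : forall c, (c < m)%N -> mu ^+ 4 * w 0%N (3 * c + 1)%N = S - w 0%N (3 * c + 3)%N.
  move=> c hc; case: (EQ c hc) => Ea Eb Ec Ed.
  by rewrite -Ed -Ec -Eb -Ea; ring.
have B4 : forall c, (c < m)%N -> mu ^+ 4 * w 0%N (3 * c + 3)%N = S - w 0%N (3 * c + 1)%N.
  move=> c hc; case: (FQ c hc) => Ea Eb Ec Ed.
  by rewrite -Ed -Ec -Eb -Ea; ring.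
have HS : mu ^+ 4 * S = m%:R * (S + S) - S.
  have -> : mu ^+ 4 * S = \sum_(c < m) (S + S - (w 0%N (3 * c + 1)%N + w 0%N (3 * c + 3)%N)).
    rewrite {1}/S mulr_sumr; apply: eq_bigr => c _.
    rewrite mulrDr A4 // B4 //; ring.
  by rewrite sumrB (@sum_const_m R m).
have Sge0 : 0 <= S by apply: sumr_ge0 => c _; apply: addr_ge0.
have S0 : S != 0.
  apply/eqP => HS0.
  have zs : forall c, (c < m)%N -> w 0%N (3 * c + 1)%N = 0 /\ w 0%N (3 * c + 3)%N = 0.
    move=> c hc.
    have := (@psumr_eq0P R _ xpredT (fun d : 'I_m => w 0%N (3 * d + 1)%N + w 0%N (3 * d + 3)%N)
               (fun d _ => addr_ge0 (w0 _ _) (w0 _ _)) HS0 (Ordinal hc) isT) => /= H.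
    have := w0 0%N (3 * c + 1)%N; have := w0 0%N (3 * c + 3)%N.
    split; lra.
  have zall : forall a b, (a < (3 * m).+1)%N -> (b < (3 * m).+1)%N -> radj a b -> w a b = 0.
    apply: adj_ind => c hc; case: (zs c hc) => z1 z3; case: (EQ c hc) => Ea Eb Ec Ed;
      case: (FQ c hc) => Fa Fb Fc Fd //.
    - by rewrite -Fc -Fb -Fa z3 !mulr0.
    - by rewrite -Ea z1 mulr0.
    - by rewrite -Fb -Fa z3 !mulr0.
    - by rewrite -Eb -Ea z1 !mulr0.
    - by rewrite -Ec -Eb -Ea z1 !mulr0.
    - by rewrite -Fa z3 mulr0.
  move: ve1; rewrite (@wo_v R _ _ v e1) woE zall // ?eqxx //.
  by have := valP e1; rewrite rose_adjE.
have hmu : mu ^+ 4 = 2 * m%:R - 1.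
  have : (mu ^+ 4 - (2 * m%:R - 1)) * S = 0 by rewrite mulrBl HS; ring.
  by move/eqP; rewrite mulf_eq0 (negbTE S0) orbF subr_eq0 => /eqP.
have h2 : (2 : R) <= m%:R by rewrite ler_nat.
have mu41 : mu ^+ 4 - 1 != 0 by rewrite hmu; apply/eqP => H; lra.
have al : forall c, (c < m)%N -> w 0%N (3 * c + 1)%N = S / (2 * m%:R) /\ w 0%N (3 * c + 3)%N = S / (2 * m%:R).
  move=> c hc; have a4 := A4 c hc; have b4 := B4 c hc.
  have eqa : w 0%N (3 * c + 1)%N = w 0%N (3 * c + 3)%N.
    have : (mu ^+ 4 - 1) * (w 0%N (3 * c + 1)%N - w 0%N (3 * c + 3)%N) = 0.
      by rewrite mulrBr !mulrBl a4 b4; ring.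
    by move/eqP; rewrite mulf_eq0 (negbTE mu41) /= subr_eq0 => /eqP.
  have m0 : (m%:R : R) != 0 by rewrite pnatr_eq0 -lt0n.
  have : w 0%N (3 * c + 1)%N = S / (2 * m%:R).
    rewrite -eqa hmu in a4.
    have E2 : w 0%N (3 * c + 1)%N * (2 * m%:R) = S.
      have : (2 * m%:R - 1) * w 0%N (3 * c + 1)%N + w 0%N (3 * c + 1)%N = S by rewrite a4; ring.
      move=> <-; ring.
    by rewrite -E2; field.
  by move=> E; split => //; rewrite -eqa.
have [a0 a0E] : exists a0, a0 = S / (2 * m%:R) by eexists.
rewrite -a0E in al.
have m0 : (m%:R : R) != 0 by rewrite pnatr_eq0 -lt0n.
have a00 : 0 < a0.
  rewrite a0E divr_gt0 //; last by apply: mulr_gt0; lra.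
  by rewrite lt_def S0.
have mu0 : mu != 0 by apply/eqP => H; move: hmu; rewrite H expr0n /=; lra.
pose xn (a : nat) := nb_centrality v (inord a).
have xE : forall c, (c < m)%N ->
  [/\ xn (3 * c + 1)%N = (mu ^+ 3 + mu) * a0, xn (3 * c + 2)%N = 2 * mu ^+ 2 * a0 &
      xn (3 * c + 3)%N = (mu ^+ 3 + mu) * a0].
  move=> c hc; case: (al c hc) => z1 z3; case: (EQ c hc) => Ea Eb Ec Ed; case: (FQ c hc) => Fa Fb Fc Fd.
  split; rewrite /xn cent ?lt3 //.
  - rewrite (@row1 R m (w (3 * c + 1)%N) c hc) -Fc -Fb -Fa -Ea z1 z3; ring.
  - rewrite (@row2 R m (w (3 * c + 2)%N) c hc) -Fb -Fa -Eb -Ea z1 z3; ring.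
  - rewrite (@row3 R m (w (3 * c + 3)%N) c hc) -Ec -Eb -Ea -Fa z1 z3; ring.
have x0 : xn 0%N = (mu ^+ 4 + 1) * a0.
  by rewrite /xn cent // (@rowH R m (w 0%N)) -/S hmu a0E; field.
have key := @nb_key R m mu a0 xn hm mu0 a00 hmu x0
  (fun c hc => let: And3 e _ _ := xE c hc in e)
  (fun c hc => let: And3 _ e _ := xE c hc in e)
  (fun c hc => let: And3 _ _ e := xE c hc in e).
apply/matrixP => i j; rewrite !mxE rose_adjE.
have Dn : \sum_k adjmx R (@rose_adj (3 * m).+1) i k * nb_centrality v k =
          \sum_(k < (3 * m).+1) (if radj i k then xn k else 0).
  apply: eq_bigr => k _; rewrite mxE rose_adjE /xn inord_val.
  by case: (radj i k); rewrite ?mul1r ?mul0r.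
rewrite Dn.
case E: (radj i j); last by rewrite !mul0r.
by rewrite mul1r -(key i j) // /xn inord_val.
Qed.

Local Close Scope classical_set_scope.

Theorem theorem7 (R : realType) (m : nat) (hm : (2 <= m)%N) :
  let N := (3 * m).+1 in
  let A : 'M[R]_N := adjmx R (@rose_adj N) in
  let mm : R := m%:R in
  let NN : R := N%:R in
  (* TURW *)
  (hitting_time_finite (turw A) /\
   gmht (turw A) = 20 * mm * (3 * mm - 1) / (3 * (3 * mm + 1)) /\
   gmht (turw A) = 20 * (NN - 1) * (NN - 2) / (9 * NN)) /\
  (* NBCRW *)
  (forall (mu : R) (v : dedge (@rose_adj N) -> R),
     nb_data mu v ->
     let P := nbcrw A (nb_centrality v) in
     hitting_time_finite P /\
     gmht P = (2 * mm ^+ 3 + 12 * mm ^+ 2 - 14 * mm + 4)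
                / ((3 * mm + 1) * Num.sqrt (2 * mm - 1))
              + (36 * mm ^+ 2 - 8 * mm) / (3 * (3 * mm + 1)) /\
     gmht P = (2 * NN ^+ 2 + 30 * NN - 192) / (9 * Num.sqrt (6 * NN - 15))
              + (268 + 20 * Num.sqrt (6 * NN - 15)) / (9 * NN * Num.sqrt (6 * NN - 15))
              + (12 * NN - 32) / 9) /\
  (* MERW *)
  (forall (lam : R) (psi : 'cV[R]_N),
     merw_data A lam psi ->
     let P := merw A lam psi in
     hitting_time_finite P /\
     gmht P = (6 * mm ^+ 3 + 36 * mm ^+ 2 + 10 * mm - 12) / (9 * mm + 3) /\
     gmht P = (2 * NN ^+ 3 + 30 * NN ^+ 2 - 36 * NN - 104) / (27 * NN)).
Proof.
move=> N A mm NN.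
have hm1 : (1 <= m)%N by apply: ltnW.
have h2 : (2 : R) <= m%:R by rewrite ler_nat.
have NNE : NN = 3 * m%:R + 1 by rewrite /NN /N -natr1 natrM.
have m0 : (m%:R : R) != 0 by rewrite pnatr_eq0 -lt0n.
split; [|split].
- rewrite /A turw_Pg //.
  have hp0 : (0 : R) < 2^-1 by rewrite invr_gt0.
  have hp1 : (2^-1 : R) < 1 by rewrite invf_lt1 // ltr1n.
  have [Hf _] := @Pg_hit R m 2^-1 hm1 hp0 hp1.
  rewrite (@Pg_gmht R m 2^-1 hm1 hp0 hp1) GT_turw //.
  split => //; split => //.
  rewrite NNE /mm; field; nzs.
- move=> mu v hnb P; rewrite /P /A (@nb_Pg R m hm mu v hnb).
  set s := Num.sqrt (2 * m%:R - 1).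
  have s0 : 0 < s by rewrite sqrtr_gt0; lra.
  have hs : s ^+ 2 = 2 * m%:R - 1 by rewrite sqr_sqrtr //; lra.
  have hp0 : (0 : R) < m%:R / (m%:R + s) by apply: divr_gt0; lra.
  have hp1 : m%:R / (m%:R + s) < 1 by rewrite ltr_pdivrMr; lra.
  have [Hf _] := @Pg_hit R m _ hm1 hp0 hp1.
  rewrite (@Pg_gmht R m _ hm1 hp0 hp1) GT_nb //.
  split => //; split => //.
  have s9 : Num.sqrt (6 * NN - 15) = 3 * s.
    rewrite NNE.
    have -> : 6 * (3 * m%:R + 1) - 15 = 3 ^+ 2 * (2 * m%:R - 1) :> R by ring.
    by rewrite sqrtrM ?sqrtr_sqr ?ger0_norm // exprn_ge0.
  rewrite s9 NNE /mm -/s.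
  have hmm : (m%:R : R) = (s ^+ 2 + 1) / 2 by rewrite hs; field.
  rewrite hmm; field; nzs.
- move=> lam psi hd P; rewrite /P /A (@merw_Pg R m hm1 lam psi hd).
  have hp0 : (0 : R) < m%:R / (m%:R + 1) by apply: divr_gt0; lra.
  have hp1 : (m%:R : R) / (m%:R + 1) < 1 by rewrite ltr_pdivrMr; lra.
  have [Hf _] := @Pg_hit R m _ hm1 hp0 hp1.
  rewrite (@Pg_gmht R m _ hm1 hp0 hp1) GT_merw //.
  split => //; split => //.
  rewrite NNE /mm; field; nzs.
Qed.
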